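(* Let $I,J,K$ be a partition of $[m]$ and $\bm a\in\mathbb{R}^m$ with $P(\bm a,I,J,K)\ne\emptyset$, and let $F_{\bm a}$ be the face of $\delta\mathcal{A}_{\bm o}$ whose relative interior contains $\bm a$. Then $P(\bm b,I,J,K)\neq\emptyset$ for every $\bm b\in F_{\bm a}$.
   Context: Fix nonzero $\bm u_1,\dots,\bm u_m\in\mathbb{R}^n$ (repetitions and parallel vectors allowed), $U$ the $m\times n$ matrix with these rows; $U_I$, $\bm a_I$ denote rows/entries indexed by $I$. For a partition $I,J,K$ of $[m]$ (parts may be empty), $P(\bm a,I,J,K)=\{\bm x\in\mathbb{R}^n:U_I\bm x=\bm a_I,\ U_J\bm x\le\bm a_J,\ U_K\bm x\ge\bm a_K\}$. A circuit is a subset $C\subseteq[m]$ with $\{\bm u_i:i\in C\}$ a minimal linearly dependent indexed family; $\bm c^C\in\mathbb{R}^m$ satisfies $\sum c_i\bm u_i=\bm 0$ and $c_i\neq0\iff i\in C$. The derived arrangement $\delta\mathcal{A}_{\bm o}$ consists of the hyperplanes $\langle\bm c^C,\bm y\rangle=0$ in $\mathbb{R}^m$; its open faces are the nonempty sets $\{\bm y:\operatorname{sign}\langle\bm c^C,\bm y\rangle=\epsilon_C\ \forall C\}$ for fixed signs $\epsilon_C$, and its faces are the closures of open faces. Thus $F_{\bm a}$ is the closure of the open face containing $\bm a$. *)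

(* Defs.v *)
From HB Require Import structures.
From mathcomp Require Import all_boot all_order all_algebra.
From mathcomp Require Import all_classical all_reals all_analysis.
Set Implicit Arguments. Unset Strict Implicit. Unset Printing Implicit Defensive.
Import Order.TTheory GRing.Theory Num.Theory numFieldNormedType.Exports.
Local Open Scope ring_scope.

Section Defs.
Variables (R : realType) (m n : nat).
Implicit Types (U : 'M[R]_(m, n)) (C : {set 'I_m}).

Definition lin_dep U C : Prop :=
  exists d : 'cV[R]_m, d != 0 /\ (forall i, i \notin C -> d i 0 = 0) /\ d^T *m U = 0.

Definition circuit U C : Prop :=
  lin_dep U C /\ forall D : {set 'I_m}, D \proper C -> ~ lin_dep U D.

Definition circuit_vector U C (c : 'cV[R]_m) : Prop :=
  c^T *m U = 0 /\ forall i, (c i 0 != 0) = (i \in C).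

Definition dotv (x y : 'cV[R]_m) : R := \sum_(i < m) x i 0 * y i 0.

Definition polyhedron U (a : 'cV[R]_m) (I J K : {set 'I_m}) : set 'cV[R]_n :=
  [set x | forall i, (i \in I -> (U *m x) i 0 = a i 0) /\
                     (i \in J -> (U *m x) i 0 <= a i 0) /\
                     (i \in K -> (U *m x) i 0 >= a i 0)].

(* The open face of the derived arrangement containing a, given a choice
   c C of circuit vectors; and its closure, the face F_a. *)
Definition open_face U (c : {set 'I_m} -> 'cV[R]_m) (a : 'cV[R]_m) : set 'cV[R]_m :=
  [set y | forall C, circuit U C -> Num.sg (dotv (c C) y) = Num.sg (dotv (c C) a)].

Definition face_of U (c : {set 'I_m} -> 'cV[R]_m) (a : 'cV[R]_m) : set 'cV[R]_m :=
  @closure 'M[R]_(m, 1) (open_face U c a).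

Definition is_partition (I J K : {set 'I_m}) : Prop :=
  [/\ I :&: J = finset.set0, I :&: K = finset.set0, J :&: K = finset.set0 & I :|: J :|: K = finset.setT].

End Defs.

(* Main.v *)
Require Import Defs.
From HB Require Import structures.
From mathcomp Require Import all_boot all_order all_algebra.
From mathcomp Require Import all_classical all_reals all_analysis.
From mathcomp Require Import ring lra.
From Stdlib Require Import Classical.
Set Implicit Arguments. Unset Strict Implicit. Unset Printing Implicit Defensive.
Import Order.TTheory GRing.Theory Num.Theory numFieldNormedType.Exports.
Local Open Scope classical_set_scope.
Local Open Scope ring_scope.
Section FM.
Variables (R : realFieldType) (n : nat).
Definition cstr := ('rV[R]_n * R)%type.
Definition dotr (v x : 'rV[R]_n) : R := \sum_j v 0 j * x 0 j.
Definition satc (x : 'rV[R]_n) (p : cstr) := dotr p.1 x <= p.2.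

Inductive deriv (S : seq cstr) : 'rV[R]_n -> R -> Prop :=
| dIn p : p \in S -> deriv S p.1 p.2
| dAdd v1 b1 v2 b2 : deriv S v1 b1 -> deriv S v2 b2 -> deriv S (v1 + v2) (b1 + b2)
| dScale t v b : 0 <= t -> deriv S v b -> deriv S (t *: v) (t * b).

Lemma deriv_sub S S' v b : (forall p, p \in S' -> deriv S p.1 p.2) ->
  deriv S' v b -> deriv S v b.
Proof.
move=> H; elim=> {v b} [p /H //| v1 b1 v2 b2 _ ? _ ?|t v b ? _ ?].
- exact: dAdd.
- exact: dScale.
Qed.

Lemma interval_lemma (ls us : seq R) :
  (forall l u, l \in ls -> u \in us -> l <= u) ->
  exists t, (forall l, l \in ls -> l <= t) /\ (forall u, u \in us -> t <= u).
Proof.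
elim: ls => [_|l ls' IH H].
  elim: us => [|u us' [t [_ Ht]]]; first by exists 0.
  exists (Order.min u t); split=> // u'; rewrite inE => /orP[/eqP->|/Ht].
    by rewrite ge_min lexx.
  by move=> htu; rewrite ge_min htu orbT.
have [t [Hl Hu]] : exists t, (forall l, l \in ls' -> l <= t) /\ (forall u, u \in us -> t <= u).
  by apply: IH => l' u Hl' Hu; apply: H => //; rewrite inE Hl' orbT.
exists (Order.max l t); split.
  move=> l'; rewrite inE => /orP[/eqP->|/Hl]; first by rewrite le_max lexx.
  by move=> h; rewrite le_max h orbT.
move=> u Hu'; rewrite ge_max Hu // andbT; apply: H => //; exact: mem_head.
Qed.

Variable k : 'I_n.
Definition ek (v : 'rV[R]_n) := v 0 k.
Definition comb (p q : cstr) : cstr :=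
  ((- ek q.1) *: p.1 + (ek p.1) *: q.1, (- ek q.1) * p.2 + ek p.1 * q.2).
Definition elim_seq (S : seq cstr) : seq cstr :=
  [seq p <- S | ek p.1 == 0] ++
  [seq comb p q | p <- [seq p <- S | 0 < ek p.1], q <- [seq p <- S | ek p.1 < 0]].

Lemma elim_deriv S p : p \in elim_seq S -> deriv S p.1 p.2.
Proof.
rewrite mem_cat => /orP[|/allpairsP[[p1 q1] [/= Hp Hq ->]]].
  by rewrite mem_filter => /andP[_ /dIn].
rewrite mem_filter in Hp; rewrite mem_filter in Hq.
case/andP: Hp => Hp1 Hp2; case/andP: Hq => Hq1 Hq2.
apply: dAdd; apply: dScale; try exact: dIn.
  by rewrite oppr_ge0 ltW.
by rewrite ltW.
Qed.

Definition upd (x : 'rV[R]_n) t : 'rV[R]_n := \row_j (if j == k then t else x 0 j).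
Definition Ar (x v : 'rV[R]_n) := \sum_(j | j != k) v 0 j * x 0 j.

Lemma dotr_upd x v t : dotr v (upd x t) = Ar x v + ek v * t.
Proof.
rewrite /dotr (bigD1 k) //= addrC /upd mxE eqxx; congr (_ + _).
by apply: eq_bigr => j /negbTE Hj; rewrite mxE Hj.
Qed.

Lemma upd_id x : upd x (x 0 k) = x.
Proof. by apply/rowP => j; rewrite mxE; case: eqP => // ->. Qed.

Lemma ArD x v1 v2 : Ar x (v1 + v2) = Ar x v1 + Ar x v2.
Proof. by rewrite /Ar -big_split; apply: eq_bigr => j _; rewrite mxE mulrDl. Qed.
Lemma ArZ x a v : Ar x (a *: v) = a * Ar x v.
Proof. by rewrite /Ar mulr_sumr; apply: eq_bigr => j _; rewrite mxE mulrA. Qed.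

Lemma elim_feas S x : (forall p, p \in elim_seq S -> satc x p) ->
  exists x', forall p, p \in S -> satc x' p.
Proof.
move=> H.
pose P := [seq p <- S | 0 < ek p.1]; pose N := [seq p <- S | ek p.1 < 0].
have Hc : forall p q, p \in P -> q \in N ->
    (q.2 - Ar x q.1) / ek q.1 <= (p.2 - Ar x p.1) / ek p.1.
  move=> p q Hp Hq.
  have Hpq : comb p q \in elim_seq S.
    by rewrite mem_cat; apply/orP; right; apply/allpairsP; exists (p, q).
  have := H _ Hpq; rewrite /satc -[x in dotr _ x](upd_id x) dotr_upd /comb /=.
  rewrite ArD !ArZ /ek [X in X * x 0 k](_ : _ = 0); last first.
    by rewrite !mxE /=; ring.
  rewrite mul0r addr0.
  rewrite mem_filter in Hp; rewrite mem_filter in Hq.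
  case/andP: Hp => Hp1 _; case/andP: Hq => Hq1 _.
  rewrite /ek in Hp1 Hq1 *.
  set ep := p.1 0 k in Hp1 *; set eq := q.1 0 k in Hq1 *.
  set Ap := Ar x p.1; set Aq := Ar x q.1.
  move=> Hle.
  set L := (q.2 - Aq) / eq; set U := (p.2 - Ap) / ep.
  have e1 : L * eq = q.2 - Aq by rewrite /L divfK ?lt_eqF.
  have e2 : U * ep = p.2 - Ap by rewrite /U divfK ?gt_eqF.
  clearbody L U.
  have h1 : 0 <= (ep * eq) * (L - U).
    rewrite (_ : (ep*eq)*(L-U) = ep*(L*eq) - eq*(U*ep)); last by ring.
    rewrite e1 e2; nra.
  have h2 : ep * eq < 0 by rewrite pmulr_rlt0.
  nra.
have [t [Ht1 Ht2]] := interval_lemma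
  (ls := [seq (q.2 - Ar x q.1) / ek q.1 | q <- N])
  (us := [seq (p.2 - Ar x p.1) / ek p.1 | p <- P])
  (fun l u Hl Hu => ltac:(case/mapP: Hl => q Hq ->; case/mapP: Hu => p Hp ->; exact: Hc)).
exists (upd x t) => p Hp; rewrite /satc dotr_upd.
have [Hpos|Hn|H0] := ltrgt0P (ek p.1).
- have Hq : p \in P by rewrite mem_filter /= Hpos Hp.
  have := Ht2 _ (map_f (fun q : cstr => (q.2 - Ar x q.1) / ek q.1) Hq).
  set l := (_ / _) => Hl.
  have e1 : l * ek p.1 = p.2 - Ar x p.1 by rewrite /l divfK ?gt_eqF.
  clearbody l; nra.
- have Hq : p \in N by rewrite mem_filter /= Hn Hp.
  have := Ht1 _ (map_f (fun q : cstr => (q.2 - Ar x q.1) / ek q.1) Hq).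
  set l := (_ / _) => Hl.
  have e1 : l * ek p.1 = p.2 - Ar x p.1 by rewrite /l divfK ?lt_eqF.
  clearbody l; nra.
- have Hz : p \in elim_seq S by rewrite mem_cat mem_filter /= H0 eqxx Hp.
  have := H _ Hz; rewrite /satc -[x in dotr _ x](upd_id x) dotr_upd H0 !mul0r.
  by rewrite addr0.
Qed.
End FM.

Section Farkas.
Variables (R : realFieldType) (n : nat).

Lemma farkas_k (k : nat) : forall S : seq (cstr R n),
  (forall p, p \in S -> forall j : 'I_n, (k <= j)%N -> p.1 0 j = 0) ->
  ~ (exists x, forall p, p \in S -> satc x p) ->
  exists b, b < 0 /\ deriv S 0 b.
Proof.
elim: k => [|k IH] S HS Hinf.
  have [p [Hp Hn]] : exists p, p \in S /\ ~ satc 0 p.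
    apply: NNPP => Hc; apply: Hinf; exists 0 => p Hp.
    by apply: NNPP => Hn; apply: Hc; exists p.
  have Hp0 : p.1 = 0 by apply/rowP => j; rewrite HS // mxE.
  exists p.2; split; last by rewrite -Hp0; exact: dIn.
  move: Hn; rewrite /satc /dotr big1 => [|j _]; last by rewrite mxE mulr0.
  by move/negP; rewrite -ltNge.
case: (ltnP k n) => Hkn; last first.
  apply: IH => // p Hp j Hj; exfalso; move: (ltn_ord j); rewrite ltnNge.
  by rewrite (leq_trans Hkn Hj).
pose kk := Ordinal Hkn.
have [b [Hb Hd]] : exists b, b < 0 /\ deriv (elim_seq kk S) 0 b.
  apply: IH.
    move=> p; rewrite mem_cat => /orP[|/allpairsP[[p1 q1] [/= Hp Hq ->]]].
      rewrite mem_filter => /andP[/eqP He Hp] j Hj.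
      case: (ltnP k j) => Hkj; first exact: HS.
      have -> : j = kk by apply: val_inj => /=; apply/eqP; rewrite eqn_leq Hj Hkj.
      exact: He.
    rewrite mem_filter in Hp; rewrite mem_filter in Hq.
    case/andP: Hp => _ Hp; case/andP: Hq => _ Hq.
    move=> j Hj /=; rewrite !mxE.
    case: (ltnP k j) => Hkj; first by rewrite (HS _ Hp) ?(HS _ Hq) ?mulr0 ?addr0.
    have -> : j = kk by apply: val_inj => /=; apply/eqP; rewrite eqn_leq Hj Hkj.
    rewrite /ek; ring.
  move=> [x Hx]; apply: Hinf; exact: (elim_feas Hx).
exists b; split=> //; apply: deriv_sub Hd => p; exact: elim_deriv.
Qed.

Lemma farkas (S : seq (cstr R n)) :
  ~ (exists x, forall p, p \in S -> satc x p) ->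
  exists b, b < 0 /\ deriv S 0 b.
Proof.
apply: (@farkas_k n) => p _ j Hj; exfalso; move: (ltn_ord j); rewrite ltnNge.
by rewrite Hj.
Qed.
End Farkas.

Section Link.
Variables (R : realType) (m n : nat) (U : 'M[R]_(m, n)) (I J K : {set 'I_m}).
Hypothesis Hpart : is_partition I J K.

Definition compat (y : 'cV[R]_m) :=
  forall i, (i \in J -> 0 <= y i 0) /\ (i \in K -> y i 0 <= 0).

Definition S0 (b : 'cV[R]_m) : seq (cstr R n) :=
  [seq (row i U, b i 0) | i <- enum (I :|: J)] ++
  [seq (- row i U, - b i 0) | i <- enum (I :|: K)].

Lemma dotr_row i (x : 'rV[R]_n) : dotr (row i U) x = (U *m x^T) i 0.
Proof. by rewrite /dotr mxE; apply: eq_bigr => j _; rewrite !mxE. Qed.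

Lemma dotr_N (v x : 'rV[R]_n) : dotr (- v) x = - dotr v x.
Proof. by rewrite /dotr -sumrN; apply: eq_bigr => j _; rewrite !mxE mulNr. Qed.

Lemma S0_feas b x : (forall p, p \in S0 b -> satc x p) -> polyhedron U b I J K (x^T).
Proof.
move=> H i.
have H1 : i \in I :|: J -> (U *m x^T) i 0 <= b i 0.
  move=> Hi; have := H (row i U, b i 0); rewrite /satc /= dotr_row; apply.
  by rewrite mem_cat map_f // mem_enum.
have H2 : i \in I :|: K -> b i 0 <= (U *m x^T) i 0.
  move=> Hi; have := H (- row i U, - b i 0); rewrite /satc /= dotr_N dotr_row lerN2; apply.
  by rewrite mem_cat map_f ?orbT // mem_enum.
split; first by move=> Hi; apply/eqP; rewrite eq_le H1 ?H2 // inE Hi.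
by split=> Hi; [apply: H1 | apply: H2]; rewrite inE Hi orbT.
Qed.

Lemma dotvD (x y z : 'cV[R]_m) : dotv (x + y) z = dotv x z + dotv y z.
Proof. by rewrite /dotv -big_split; apply: eq_bigr => i _; rewrite mxE mulrDl. Qed.
Lemma dotvZ t (x z : 'cV[R]_m) : dotv (t *: x) z = t * dotv x z.
Proof. by rewrite /dotv mulr_sumr; apply: eq_bigr => i _; rewrite mxE mulrA. Qed.
Lemma dotvN (x z : 'cV[R]_m) : dotv (- x) z = - dotv x z.
Proof. by rewrite /dotv -sumrN; apply: eq_bigr => i _; rewrite mxE mulNr. Qed.
Lemma dotv_delta i (z : 'cV[R]_m) : dotv (delta_mx i 0) z = z i 0.
Proof.
rewrite /dotv (bigD1 i) //= big1 => [|j /negbTE Hj]; first by rewrite mxE !eqxx mul1r addr0.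
by rewrite mxE Hj mul0r.
Qed.

Lemma deriv_cert b v beta : deriv (S0 b) v beta ->
  exists y, compat y /\ v = y^T *m U /\ beta = dotv y b.
Proof.
case: Hpart => HIJ HIK HJK _.
have dis : forall A B (i : 'I_m), A :&: B = finset.set0 -> i \in A -> i \in B -> False.
  move=> A B i HAB HA HB; have : i \in A :&: B by rewrite inE HA HB.
  by rewrite HAB inE.
elim=> {v beta} [p|v1 b1 v2 b2 _ [y1 [c1 [-> ->]]] _ [y2 [c2 [-> ->]]]|t v beta Ht _ [y [c [-> ->]]]].
- rewrite mem_cat => /orP[]/mapP[i]; rewrite mem_enum => Hi -> /=.
    exists (delta_mx i 0); split; last by rewrite trmx_delta -rowE dotv_delta.
    move=> j; rewrite mxE; split=> Hj; first by case: (j == i); case: (0 == 0).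
    case: eqP => // Eji; subst j; exfalso; case/setUP: Hi => Hi.
      exact: (dis _ _ _ HIK Hi Hj).
    exact: (dis _ _ _ HJK Hi Hj).
  exists (- delta_mx i 0); split; last by rewrite linearN /= mulNmx trmx_delta -rowE dotvN dotv_delta.
  move=> j; rewrite !mxE; split=> Hj; last by case: (j == i); rewrite ?oppr_le0 // oppr0.
  case: eqP => Eji /=; last by rewrite oppr0.
  subst j; exfalso; case/setUP: Hi => Hi.
    exact: (dis _ _ _ HIJ Hi Hj).
  exact: (dis _ _ _ HJK Hj Hi).
- exists (y1 + y2); split; last by rewrite linearD /= mulmxDl dotvD.
  move=> i; have [c1a c1b] := c1 i; have [c2a c2b] := c2 i.
  rewrite mxE; split=> Hi; [have := c1a Hi; have := c2a Hi; lra | have := c1b Hi; have := c2b Hi; lra].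
- exists (t *: y); split; last by rewrite linearZ /= -scalemxAl dotvZ.
  move=> i; have [ca cb] := c i; rewrite mxE; split=> Hi.
    by rewrite mulr_ge0 ?ca.
  by rewrite mulr_ge0_le0 ?cb.
Qed.

End Link.

Section Reduce.
Variables (R : realType) (m n : nat) (U : 'M[R]_(m, n)) (I J K : {set 'I_m}) (b : 'cV[R]_m).

Definition cert (y : 'cV[R]_m) := compat J K y /\ y^T *m U = 0 /\ dotv y b < 0.
Definition supp (y : 'cV[R]_m) : {set 'I_m} := [set i | y i 0 != 0].

Lemma conf_compat (y w : 'cV[R]_m) : compat J K y -> (forall i, y i 0 = 0 -> w i 0 = 0) ->
  (forall i, 0 <= w i 0 * y i 0) -> compat J K w.
Proof.
move=> Hy Hz Hp i; have [Ha Hb] := Hy i; have := Hp i.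
have [H0|Hne] := eqVneq (y i 0) 0; first by rewrite (Hz _ H0) => _; split.
move=> Hwy; split=> Hi.
  have Hy0 : 0 < y i 0 by rewrite lt_neqAle eq_sym Hne Ha.
  nra.
have Hy0 : y i 0 < 0 by rewrite lt_neqAle Hne Hb.
nra.
Qed.

Lemma step (y z : 'cV[R]_m) : cert y -> z^T *m U = 0 -> (forall i, y i 0 = 0 -> z i 0 = 0) ->
  0 <= dotv z b -> (exists i, 0 < z i 0 * y i 0) ->
  exists w, cert w /\ supp w \proper supp y.
Proof.
move=> [Hc [Hk Hb]] Hzk Hzs Hzb [i1 Hi1].
pose P := fun i => 0 < z i 0 * y i 0.
pose F := fun i => y i 0 / z i 0.
have Hr : forall i, P i -> F i * z i 0 = y i 0.
  by move=> i Pi; rewrite /F divfK //; apply/negP => /eqP H; move: Pi; rewrite /P H mul0r ltxx.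
have [i0 Pi0 Hmin] := arg_minP F (Hi1 : P i1).
set t := F i0.
have tpos : 0 < t.
  have e := Hr _ Pi0; rewrite -/t in e; move: Pi0; rewrite /P => h.
  clearbody t; nra.
have Hw : forall i, (y - t *: z) i 0 = y i 0 - t * z i 0 by move=> i; rewrite !mxE.
have Hws : forall i, y i 0 = 0 -> (y - t *: z) i 0 = 0.
  by move=> i H0; rewrite Hw H0 (Hzs _ H0) mulr0 subr0.
have Hwp : forall i, 0 <= (y - t *: z) i 0 * y i 0.
  move=> i; rewrite Hw.
  have [Pi|nPi] := boolP (P i).
    have := Hmin _ Pi; rewrite -/t => ht; have e := Hr _ Pi.
    move: Pi; rewrite /P => Pi; clearbody t; move: ht e Pi; set r := F i; clearbody r => ht e Pi.
    rewrite -e; nra.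
  move: nPi; rewrite /P -leNgt => h; clearbody t; nra.
exists (y - t *: z); split.
  split; first exact: conf_compat Hc Hws Hwp.
  split; first by rewrite linearB linearZ /= mulmxBl -scalemxAl Hk Hzk scaler0 subr0.
  rewrite -scaleNr dotvD dotvZ; clearbody t; nra.
apply/properP; split.
  by apply/fintype.subsetP => i; rewrite !inE; apply: contra => /eqP /Hws ->.
exists i0; rewrite !inE.
  by apply/negP => /eqP H0; move: Pi0; rewrite /P H0 mulr0 ltxx.
by rewrite negbK Hw -(Hr _ Pi0) -/t subrr.
Qed.
Lemma conf_cert (y w : 'cV[R]_m) : compat J K y -> w^T *m U = 0 -> dotv w b < 0 ->
  (forall i, y i 0 = 0 -> w i 0 = 0) -> (forall i, 0 <= w i 0 * y i 0) -> cert w.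
Proof. by move=> Hc Hk Hb Hs Hp; split; [exact: conf_compat Hc Hs Hp|]. Qed.

Lemma cert_reduce y : cert y -> ~ circuit U (supp y) ->
  exists w, cert w /\ supp w \proper supp y.
Proof.
move=> Hy Hnc; have [Hc [Hk Hb]] := Hy.
have Hld : lin_dep U (supp y).
  exists y; split; last split=> //.
    by apply/negP => /eqP H0; move: Hb; rewrite H0 /dotv big1 ?ltxx // => i _; rewrite mxE mul0r.
  by move=> i; rewrite inE negbK => /eqP.
have [D [HD [z [Hz0 [Hzs Hzk]]]]] : exists D : {set 'I_m}, D \proper supp y /\ lin_dep U D.
  apply: NNPP => Hn; apply: Hnc; split=> // D HD Hl; apply: Hn; by exists D.
have zsup : forall i, y i 0 = 0 -> z i 0 = 0.
  move=> i H0; apply: Hzs; apply/negP => HiD.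
  by have := fintype.subsetP (proper_sub HD) _ HiD; rewrite inE H0 eqxx.
have zsupD : forall w : 'cV[R]_m, (forall i, i \notin D -> w i 0 = 0) -> supp w \proper supp y.
  move=> w Hw; apply: sub_proper_trans HD; apply/fintype.subsetP => i; rewrite inE.
  by apply: contraR => /Hw ->; rewrite eqxx.
have zN : (- z)^T *m U = 0 by rewrite linearN /= mulNmx Hzk oppr0.
have zNs : forall i, y i 0 = 0 -> (- z) i 0 = 0 by move=> i /zsup; rewrite mxE => ->; rewrite oppr0.
have zND : forall i, i \notin D -> (- z) i 0 = 0 by move=> i /Hzs; rewrite mxE => ->; rewrite oppr0.
have [spos|sneg|s0] := ltrgt0P (dotv z b).
- have [[i Hi]|Hn] := classic (exists i, 0 < z i 0 * y i 0).
    by apply: (step Hy Hzk zsup (ltW spos)); exists i.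
  exists (- z); split; last exact: zsupD.
  apply: conf_cert Hc zN _ zNs _; first by rewrite dotvN oppr_lt0.
  move=> i; rewrite mxE mulNr oppr_ge0 leNgt; apply/negP => h; apply: Hn; by exists i.
- have [[i Hi]|Hn] := classic (exists i, z i 0 * y i 0 < 0).
    apply: (step Hy zN zNs); first by rewrite dotvN oppr_ge0 ltW.
    by exists i; rewrite mxE mulNr oppr_gt0.
  exists z; split; last exact: zsupD.
  apply: conf_cert Hc Hzk sneg zsup _.
  move=> i; rewrite leNgt; apply/negP => h; apply: Hn; by exists i.
- have [i Hi] : exists i, z i 0 != 0.
    apply: NNPP => Hn; apply/negP: Hz0; rewrite negbK; apply/eqP/matrixP => i j.
    rewrite ord1 mxE; apply: NNPP => Hne; apply: Hn; exists i; exact/eqP.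
  have Hyi : y i 0 != 0 by apply/negP => /eqP /zsup /eqP; rewrite (negbTE Hi).
  have [Hp|Hm|H0] := ltrgt0P (z i 0 * y i 0).
  + by apply: (step Hy Hzk zsup); [rewrite s0 | exists i].
  + apply: (step Hy zN zNs); first by rewrite dotvN s0 oppr0.
    by exists i; rewrite mxE mulNr oppr_gt0.
  + by move/eqP: H0; rewrite mulf_eq0 (negbTE Hi) (negbTE Hyi).
Qed.

Lemma cert_circuit y : cert y -> exists w, cert w /\ circuit U (supp w).
Proof.
move: y; suff : forall N y, (#|supp y| < N)%N -> cert y -> exists w, cert w /\ circuit U (supp w).
  by move=> H y; apply: (H #|supp y|.+1).
elim=> [|N IH] y //; rewrite ltnS => Hc Hy.
have [Hci|Hnc] := classic (circuit U (supp y)); first by exists y.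
have [w [Hw Hp]] := cert_reduce Hy Hnc.
apply: (IH w) => //; apply: leq_trans Hc; by rewrite (proper_card Hp).
Qed.

End Reduce.

Lemma circ_mult (R : realType) (m n : nat) (U : 'M[R]_(m, n)) (C : {set 'I_m})
  (c y : 'cV[R]_m) (i0 : 'I_m) :
  circuit U C -> circuit_vector U C c -> y^T *m U = 0 ->
  (forall i, (y i 0 != 0) = (i \in C)) -> i0 \in C ->
  y = (y i0 0 / c i0 0) *: c.
Proof.
move=> [_ Hmin] [Hck Hcs] Hyk Hys Hi0.
have Hc0 : c i0 0 != 0 by rewrite Hcs.
apply/eqP; rewrite -subr_eq0; apply/negP => Hd.
apply: (Hmin (C :\ i0)); first by rewrite properD1.
exists (y - (y i0 0 / c i0 0) *: c); split; first exact/negP. split.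
  move=> i; rewrite !inE negb_and negbK !mxE => /orP[/eqP ->|HiC].
    by rewrite divfK // subrr.
  have : y i 0 = 0 by apply/eqP; rewrite -[_ == _]negbK Hys (negbTE HiC).
  have : c i 0 = 0 by apply/eqP; rewrite -[_ == _]negbK Hcs (negbTE HiC).
  by move=> -> ->; rewrite mulr0 subr0.
by rewrite linearB linearZ /= mulmxBl -scalemxAl Hyk Hck scaler0 subr0.
Qed.

Unset Implicit Arguments.
Set Strict Implicit.

Theorem mainTheorem5 (R : realType) (m n : nat) (U : 'M[R]_(m, n))
  (c : {set 'I_m} -> 'cV[R]_m) (I J K : {set 'I_m}) (a : 'cV[R]_m) :
  (forall i : 'I_m, row i U != 0) ->
  (forall C : {set 'I_m}, circuit U C -> circuit_vector U C (c C)) ->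
  is_partition I J K ->
  polyhedron U a I J K !=set0 ->
  forall b : 'cV[R]_m, face_of U c a b -> polyhedron U b I J K !=set0.
Proof.
move=> Hrow Hcv Hpart [x0 Hx0] b0 Hb.
apply: NNPP => Hnb.
have Hinf : ~ exists x, forall p, p \in S0 U I J K b0 -> satc x p.
  by move=> [x Hx]; apply: Hnb; exists x^T; exact: S0_feas.
have [beta [Hbeta Hd]] := farkas Hinf.
have [y [Hyc [Hy0 Hyb]]] := deriv_cert Hpart Hd.
have Hcy : cert U J K b0 y by split=> //; split; [rewrite -Hy0 | rewrite -Hyb].
have [w [[Hwc [Hwk Hwb]] Hcirc]] := cert_circuit Hcy.
set C := supp w in Hcirc.
have [i0 Hi0] : exists i0, i0 \in C.
  apply: NNPP => Hn; move: Hwb; rewrite /dotv big1 ?ltxx // => i _.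
  have : w i 0 = 0.
    by apply/eqP; apply: NNPP => Hne; apply: Hn; exists i; rewrite inE; exact/negP.
  by move=> ->; rewrite mul0r.
have Hw := circ_mult Hcirc (Hcv C Hcirc) Hwk (fun i => ltac:(by rewrite inE)) Hi0.
set mu := _ / _ in Hw.
have Ha : 0 <= dotv w a.
  have : (w^T *m (U *m x0)) 0 0 = 0 by rewrite mulmxA Hwk mul0mx mxE.
  rewrite mxE => E; rewrite /dotv -[X in X <= _]E; apply: ler_sum => i _; rewrite mxE.
  case: Hpart => _ _ _ HU.
  have : i \in I :|: J :|: K by rewrite HU inE.
  have [HI [HJ HK]] := Hx0 i; have [cJ cK] := Hwc i.
  rewrite !inE => /orP[/orP[Hi|Hi]|Hi].
  - by rewrite HI.
  - have := HJ Hi; have := cJ Hi; nra.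
  - have := HK Hi; have := cK Hi; nra.
set Sg := \sum_i `|w i 0|.
have Sg0 : 0 <= Sg by apply: sumr_ge0 => i _; exact: normr_ge0.
set eps := - dotv w b0 / (Sg + 1).
have epos : 0 < eps by rewrite divr_gt0 // ?oppr_gt0 //; lra.
have [y' [Hy'o [_ Hent]]] := Hb _ (nbhsx_ballx b0 eps epos).
have Hdiff : dotv w y' - dotv w b0 <= Sg * eps.
  rewrite /dotv -sumrB /Sg mulr_suml; apply: ler_sum => i _.
  rewrite -mulrBr; have : `|b0 i 0 - y' i 0| < eps by have := Hent i 0.
  move=> h; apply: le_trans (ler_norm _) _; rewrite normrM distrC.
  by apply: ler_wpM2l; [exact: normr_ge0 | exact: ltW].
have heps : (Sg + 1) * eps = - dotv w b0 by rewrite /eps mulrC divfK //; lra.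
have Hy'neg : dotv w y' < 0.
  clearbody eps Sg; nra.
have Hsg := Hy'o C Hcirc.
move: Hy'neg Ha; rewrite Hw !dotvZ.
move: Hsg; set Y := dotv (c C) y'; set A := dotv (c C) a => Hsg.
clearbody mu Y A.
have [Yp|Yn|Y0] := ltrgt0P Y.
- have Ap : 0 < A by rewrite -sgr_gt0 -Hsg sgr_gt0.
  move=> h1 h2; nra.
- have An : A < 0 by rewrite -sgr_lt0 -Hsg sgr_lt0.
  move=> h1 h2; nra.
- by rewrite Y0 mulr0 ltxx.
Qed.
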